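(* In any execution of Algorithm A, if a process $p_i$ writes a quadruplet $Y$ into some register of $\mathit{REG}$, and $\mathit{view}$ is the array returned by the last snapshot $p_i$ took before this write, then $Y\sqsupseteq X$ for every entry $X$ of $\mathit{view}$.
   Context: Quadruplets, lexicographic order: a quadruplet is $\langle rd,\mathit{lvl},\mathit{cfl},\mathit{val}\rangle$ with $rd\in\mathbb{N}$, $\mathit{lvl}\in\{\mathtt{down}<\mathtt{up}\}$, $\mathit{cfl}\in\{\mathtt{false}<\mathtt{true}\}$, $\mathit{val}$ in a totally ordered value set with a least default $\bot$; quadruplets are totally ordered lexicographically. $X \sqsupset Y$ iff $(X>Y)\wedge[(X.rd>Y.rd)\vee X.\mathit{cfl} \vee (\neg Y.\mathit{cfl}\wedge X.\mathit{val}=Y.\mathit{val})]$; $X\sqsupseteq Y$ iff $X\sqsupset Y$ or $X=Y$. For a nonempty finite set $T$ of quadruplets with lexicographic maximum $\langle r,\ell,c,v\rangle$, $\mathrm{sup}(T)=\langle r,\ell,\mathit{conflict}(T),v\rangle$ where $\mathit{conflict}(T)$ holds iff some element of $T$ of round $r$ has conflict field $\mathtt{true}$, or the elements of $T$ of round $r$ carry at least two distinct values. Model and Algorithm A: $n$ anonymous asynchronous processes (any number may crash) share an atomic snapshot object $\mathit{REG}[1..m]$ (here $m=n$) of multi-writer registers, each initially $\langle 0,\mathtt{down},\mathtt{false},\bot\rangle$, with atomic operations $\mathrm{snapshot}()$ (returns the whole array) and $\mathrm{write}(x,X)$. A process proposing $v$ repeats forever: $\mathit{view}\leftarrow\mathrm{snapshot}()$;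 then (1) if all entries equal $\langle r,\mathtt{up},\mathtt{false},w\rangle$ with $r>0$, it returns (decides) $w$; (2) else if all entries equal $\langle r,\mathtt{down},\mathtt{false},w\rangle$ with $r>0$, it writes $\langle r+1,\mathtt{up},\mathtt{false},w\rangle$ into $\mathit{REG}[1]$; (3) else if all entries equal $\langle r,\ell,\mathtt{true},w\rangle$ with $r>0$, it writes $\langle r+1,\mathtt{down},\mathtt{false},w\rangle$ into $\mathit{REG}[1]$; (4) otherwise it computes $S=\mathrm{sup}(\{\mathit{view}[1],\dots,\mathit{view}[m],\langle 1,\mathtt{down},\mathtt{false},v\rangle\})$, lets $x$ be the smallest index with $\mathit{view}[x]\neq S$, and writes $S$ into $\mathit{REG}[x]$. *)

(* Defs.v *)
From HB Require Import structures.
From mathcomp Require Import all_boot all_order.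
Set Implicit Arguments.
Unset Strict Implicit.
Unset Printing Implicit Defensive.
Import Order.TTheory.

Section AlgorithmA.
Context {d : Order.disp_t} {V : bOrderType d}.

(* A quadruplet <rd, lvl, cfl, val>; lvl: false = down, true = up. *)
Definition quad := (nat * bool * bool * V)%type.
Definition mkQ (r : nat) (l c : bool) (v : V) : quad := (r, l, c, v).
Definition rd (X : quad) : nat := X.1.1.1.
Definition lvl (X : quad) : bool := X.1.1.2.
Definition cfl (X : quad) : bool := X.1.2.
Definition qval (X : quad) : V := X.2.
Definition qinit : quad := mkQ 0 false false \bot%O.

Definition qlt (X Y : quad) : bool :=
  (rd X < rd Y) || ((rd X == rd Y) &&
  ((~~ lvl X && lvl Y) || ((lvl X == lvl Y) &&
  ((~~ cfl X && cfl Y) || ((cfl X == cfl Y) && (qval X < qval Y)%O))))).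

Definition qsq (X Y : quad) : bool :=
  qlt Y X && [|| rd Y < rd X, cfl X | ~~ cfl Y && (qval X == qval Y)].
Definition qsqe (X Y : quad) : bool := qsq X Y || (X == Y).

Definition qmax2 (X Y : quad) : quad := if qlt X Y then Y else X.
Definition qmaxs (X : quad) (T : seq quad) : quad := foldl qmax2 X T.

Definition conflict (T : seq quad) (r : nat) : bool :=
  has (fun X => (rd X == r) && cfl X) T ||
  has (fun X => has (fun Y => [&& rd X == r, rd Y == r & qval X != qval Y]) T) T.

Definition qsup (X : quad) (T : seq quad) : quad :=
  let M := qmaxs X T in mkQ (rd M) (lvl M) (conflict (X :: T) (rd M)) (qval M).

Inductive action := ADecide of V | AWrite of nat & quad.

Definition uniform (view : seq quad) : option quad :=
  match view with
  | h :: _ => if all (pred1 h) view then Some h else None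
  | [::] => None
  end.

(* indices are 0-based: paper's REG[1] is index 0 *)
Definition default_action (v : V) (view : seq quad) : action :=
  let S := qsup (mkQ 1 false false v) view in
  AWrite (find (fun X => X != S) view) S.

Definition step_action (v : V) (view : seq quad) : action :=
  match uniform view with
  | Some h =>
      if [&& 0 < rd h, lvl h & ~~ cfl h] then ADecide (qval h)
      else if [&& 0 < rd h, ~~ lvl h & ~~ cfl h] then
        AWrite 0 (mkQ (rd h).+1 true false (qval h))
      else if (0 < rd h) && cfl h then
        AWrite 0 (mkQ (rd h).+1 false false (qval h))
      else default_action v view
  | None => default_action v view
  end.

(* local state of a process: about to snapshot / holding its last view / decided *)
Inductive lstate := LReady | LSnap of seq quad | LDone of V.

Record config := Config { regs : seq quad; locs : nat -> lstate }.

Definition init_config (n : nat) : config :=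
  Config (nseq n qinit) (fun _ => LReady).

Definition upd (f : nat -> lstate) (p : nat) (s : lstate) : nat -> lstate :=
  fun q => if q == p then s else f q.

Inductive event :=
  | ESnap of nat
  | EWrite of nat & nat & quad   (* process, register index, written value *)
  | EDecide of nat & V.

(* atomic steps of an asynchronous execution; processes proposing prop p,
   p < n; crashes = processes that simply stop taking steps *)
Inductive step (n : nat) (prop : nat -> V) : config -> event -> config -> Prop :=
  | st_snap c p : p < n -> locs c p = LReady ->
      step n prop c (ESnap p) (Config (regs c) (upd (locs c) p (LSnap (regs c))))
  | st_write c p view x Y : p < n -> locs c p = LSnap view ->
      step_action (prop p) view = AWrite x Y ->
      step n prop c (EWrite p x Y)
        (Config (set_nth qinit (regs c) x Y) (upd (locs c) p LReady))
  | st_decide c p view w : p < n -> locs c p = LSnap view ->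
      step_action (prop p) view = ADecide w ->
      step n prop c (EDecide p w) (Config (regs c) (upd (locs c) p (LDone w))).

Inductive reachable (n : nat) (prop : nat -> V) : config -> Prop :=
  | reach_init : reachable n prop (init_config n)
  | reach_step c e c' : reachable n prop c -> step n prop c e c' ->
      reachable n prop c'.

End AlgorithmA.

(* Main.v *)
Require Import Defs.
From mathcomp Require Import all_boot all_order zify.
Import Order.TTheory.
Section S.
Context {d : Order.disp_t} {V : bOrderType d}.
Lemma core (rm rX : nat) (lm cm lX cX cf : bool) (vm vX : V) :
  ~~ qlt (rm,lm,cm,vm) (rX,lX,cX,vX) ->
  (cf = false -> rX = rm -> [/\ cX = false, vX = vm & cm = false]) ->
  qsqe (rm,lm,cf,vm) (rX,lX,cX,vX).
Proof.
rewrite /qsqe /qsq /qlt /rd /lvl /cfl /qval /= !xpair_eqE.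
case: (ltngtP rX rm) => H //=.
subst rX => Hlt.
case: cf => [_|/(_ erefl erefl) [? ? ?]]; last first.
  subst; move: Hlt.
  by rewrite !eqxx /= ?orbT; case: lm lX => [] [] //=; rewrite ?ltxx ?orbT ?andbT.
move: Hlt; rewrite ?orbT ?andbT /=.
case: lm lX cm cX => [] [] [] [] //=; rewrite ?orbT //= -?leNgt ?le_eqVlt;
  case/orP => [/eqP->|->]; rewrite ?eqxx ?orbT //.

Qed.
Lemma qle_trans (a b c : @quad d V) : ~~ qlt b a -> ~~ qlt c b -> ~~ qlt c a.
Proof.
case: a => [[[r1 l1] c1] v1]; case: b => [[[r2 l2] c2] v2];
case: c => [[[r3 l3] c3] v3]; rewrite /qlt /rd /lvl /cfl /qval /=.
case: (ltngtP r2 r1) => H12; case: (ltngtP r3 r2) => H23;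
case: (ltngtP r3 r1) => H13 //=; try lia.
case: l1 l2 l3 c1 c2 c3 => [] [] [] [] [] [] //=; rewrite -?leNgt;
  exact: le_trans.
Qed.

Lemma qlt_irr (a : @quad d V) : ~~ qlt a a.
Proof.
case: a => [[[r1 l1] c1] v1]; rewrite /qlt /rd /lvl /cfl /qval /= ltnn !eqxx /=.
by case: l1 c1 => [] [] //=; rewrite ltxx.
Qed.

Lemma qlt_asym (a b : @quad d V) : qlt a b -> ~~ qlt b a.
Proof.
case: a => [[[r1 l1] c1] v1]; case: b => [[[r2 l2] c2] v2];
rewrite /qlt /rd /lvl /cfl /qval /=.
case: (ltngtP r2 r1) => H12 //=; try lia.
case: l1 l2 c1 c2 => [] [] [] [] //=; rewrite -?leNgt; exact: ltW.
Qed.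

Lemma qmaxs_spec (X : @quad d V) T :
  qmaxs X T \in X :: T /\ (forall Z, Z \in X :: T -> ~~ qlt (qmaxs X T) Z).
Proof.
elim: T X => [|t T IH] X /=.
  by split; [rewrite mem_head | move=> Z; rewrite inE => /eqP ->; exact: qlt_irr].
have [IH1 IH2] := IH (qmax2 X t).
have hX : ~~ qlt (qmax2 X t) X.
  by rewrite /qmax2; case: ifP => [/qlt_asym|_] //; exact: qlt_irr.
have ht : ~~ qlt (qmax2 X t) t.
  by rewrite /qmax2; case: ifP => [_|/negbT] //; exact: qlt_irr.
split.
  move: IH1; rewrite /qmaxs /= inE => /orP [/eqP ->|H].
    by rewrite /qmax2; case: ifP; rewrite !inE eqxx ?orbT.
  by rewrite !inE H !orbT.
move=> Z; rewrite !inE => /orP [/eqP ->|/orP [/eqP ->|HZ]].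
- exact: qle_trans hX (IH2 _ (mem_head _ _)).
- exact: qle_trans ht (IH2 _ (mem_head _ _)).
- by apply: IH2; rewrite inE HZ orbT.
Qed.

Lemma default_ok v (view : seq (@quad d V)) X :
  X \in view -> qsqe (qsup (mkQ 1 false false v) view) X.
Proof.
move=> HX.
set X0 := mkQ 1 false false v.
have [HM HMax] := qmaxs_spec X0 view.
have HXl : X \in X0 :: view by rewrite inE HX orbT.
rewrite /qsup.
set M := qmaxs X0 view.
have HnX : ~~ qlt M X := HMax X HXl.
have HM' : M \in X0 :: view := HM.
clear HM HMax.
set cf := conflict _ _.
have Hcf : cf = false -> rd X = rd M ->
   [/\ cfl X = false, qval X = qval M & cfl M = false].
  move=> Hc HrX; move: Hc; rewrite /cf /conflict => /norP [H1 H2].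
  have cX : cfl X = false.
    apply/negbTE; apply: contra H1 => cX; apply/hasP; exists X => //.
    by rewrite HrX eqxx.
  have cM : cfl M = false.
    apply/negbTE; apply: contra H1 => cM; apply/hasP; exists M => //.
    by rewrite eqxx.
  split=> //.
  apply/eqP; apply: contraNT H2 => Hne; apply/hasP; exists X => //.
  by apply/hasP; exists M => //; rewrite HrX !eqxx.
clearbody cf M.
move: Hcf HM' HnX.
case: M => [[[rm lm] cm] vm]; case: X HX HXl => [[[rX lX] cX] vX] _ _.
rewrite /mkQ /rd /lvl /cfl /qval /= => Hcf _ Hn.
by apply: (@core _ _ _ cm).
Qed.

Lemma rd_gt (X Y : @quad d V) : rd X < rd Y -> qsqe Y X.
Proof. by move=> H; rewrite /qsqe /qsq /qlt H. Qed.

Lemma uniformP (view : seq (@quad d V)) h :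
  uniform view = Some h -> forall X, X \in view -> X = h.
Proof.
case: view => [|a s] //=; case: ifP => // Hall [<-] X HX.
move: HX Hall; rewrite inE eqxx /= => /orP [/eqP -> //|HX] /allP H.
by apply/eqP; apply: H.
Qed.

Lemma step_ok v (view : seq (@quad d V)) x Y :
  step_action v view = AWrite x Y -> forall X, X \in view -> qsqe Y X.
Proof.
rewrite /step_action.
case Hu: (uniform view) => [h|]; last by rewrite /default_action => -[_ <-]; exact: default_ok.
case: ifP => _ //.
case: ifP => _.
  by move=> [_ <-] X /(@uniformP view h Hu) ->; apply: rd_gt; rewrite /rd /=.
case: ifP => _.
  by move=> [_ <-] X /(@uniformP view h Hu) ->; apply: rd_gt; rewrite /rd /=.
by rewrite /default_action => -[_ <-]; exact: default_ok.
Qed.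
End S.

Theorem lemma4 (d : Order.disp_t) (V : bOrderType d) (n : nat) (prop : nat -> V)
    (c c' : @config d V) (p x : nat) (Y : quad) (view : seq quad) :
  0 < n ->
  reachable n prop c ->
  step n prop c (EWrite p x Y) c' ->
  locs c p = LSnap view ->
  forall X, X \in view -> qsqe Y X.
Proof.
move=> _ _ Hs Hl.
inversion Hs; subst.
match goal with H : locs c p = LSnap ?w |- _ => rewrite Hl in H; case: H => ?; subst end.
match goal with H : step_action _ _ = AWrite _ _ |- _ => exact: step_ok H end.
Qed.
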